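(* Let $\Omega$ be a set of permutations. Then $$\mathcal{F}(\Omega)=\gamma\bigl(\mathrm{Modasc}[\Omega^{-1}]\bigr),\qquad\text{where } [\Omega^{-1}]=\bigcup_{\sigma\in\Omega}[\sigma^{-1}],$$ and $\mathrm{Modasc}[\Omega^{-1}]$ is the set of modified ascent sequences avoiding every Cayley permutation in $[\Omega^{-1}]$.
   Context: A Cayley permutation of length $n$ is a word of positive integers in which every integer from $1$ to its maximum occurs; $\mathrm{Cay}$ is the set of all of them. Containment $y\le x$: there are indices $i_1<\dots<i_k$ ($k$ the length of $y$) with $x(i_s)<x(i_t)\iff y(s)<y(t)$ and $x(i_s)=x(i_t)\iff y(s)=y(t)$; otherwise $x$ avoids $y$. For $x\in\mathrm{Cay}_n$, $\gamma(x)$ is the permutation obtained by sorting the pairs $(x(i),i)$ increasingly by first coordinate, ties by decreasing second coordinate, and reading the second coordinates; $\gamma(E)=\{\gamma(x):x\in E\}$. $x\sim y$ iff $\gamma(x)=\gamma(y)$, $[y]$ is the class of $y$. Modified ascent sequences: $\mathrm{Modasc}_0=\{\text{empty word}\}$, $\mathrm{Modasc}_1=\{1\}$; for $n\ge2$, $x\in\mathrm{Modasc}_n$ iff there is $v\in\mathrm{Modasc}_{n-1}$ with last letter $b$ such that either $x=va$ with $1\le a\le b$, or $x=\tilde va$ with $b<a\le2+\mathrm{asc}(v)$, where $\mathrm{asc}(v)=|\{i:v(i)<v(i+1)\}|$ and $\tilde v$ is $v$ with every entry $c\ge a$ increased by one. A permutation $\pi$ is Fishburn if there are no indices $i$ and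 $k>i+1$ with $\pi(i)<\pi(i+1)$ and $\pi(k)=\pi(i)-1$; $\mathcal{F}(\Omega)$ is the set of Fishburn permutations avoiding every pattern in $\Omega$. *)

(* Defs.v *)
(* words are seq nat with positive letters, positions 1-based
   in the paper, 0-based nth here. *)
From mathcomp Require Import all_boot.
Set Implicit Arguments. Unset Strict Implicit. Unset Printing Implicit Defensive.

Definition wmax (x : seq nat) : nat := foldr maxn 0 x.

Definition is_cay (x : seq nat) : bool :=
  all (fun a => 0 < a) x && all (fun k => k \in x) (iota 1 (wmax x)).

Definition is_perm (x : seq nat) : bool := perm_eq x (iota 1 (size x)).

Definition contains (x y : seq nat) : Prop :=
  exists idx : seq nat,
    [/\ size idx = size y, sorted ltn idx, all (fun i => i < size x) idx &
      forall s t, s < size y -> t < size y ->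
        (nth 0 x (nth 0 idx s) < nth 0 x (nth 0 idx t)) = (nth 0 y s < nth 0 y t)
        /\ (nth 0 x (nth 0 idx s) == nth 0 x (nth 0 idx t)) = (nth 0 y s == nth 0 y t)].

Definition avoids (x y : seq nat) : Prop := ~ contains x y.

Definition gamma_rel (p q : nat * nat) : bool :=
  (p.1 < q.1) || ((p.1 == q.1) && (q.2 <= p.2)).

Definition gamma (x : seq nat) : seq nat :=
  map snd (sort gamma_rel (zip x (iota 1 (size x)))).

Definition asc (v : seq nat) : nat :=
  count (fun p : nat * nat => p.1 < p.2) (zip v (behead v)).

Definition bump_from (a : nat) (v : seq nat) : seq nat :=
  map (fun c => if a <= c then c.+1 else c) v.

Inductive modasc : seq nat -> Prop :=
| modasc_nil : modasc [::]
| modasc_one : modasc [:: 1]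
| modasc_rep (v : seq nat) (a : nat) :
    modasc v -> 0 < size v -> 1 <= a -> a <= last 0 v -> modasc (rcons v a)
| modasc_new (v : seq nat) (a : nat) :
    modasc v -> 0 < size v -> last 0 v < a -> a <= (asc v).+2 ->
    modasc (rcons (bump_from a v) a).

Definition fishburn (p : seq nat) : Prop :=
  is_perm p /\
  forall i k, i.+1 < k -> k < size p -> nth 0 p i < nth 0 p i.+1 ->
    nth 0 p k <> (nth 0 p i).-1.

Definition perm_inv (s : seq nat) : seq nat :=
  map (fun j => (index j s).+1) (iota 1 (size s)).

Definition Fset (Omega : seq nat -> Prop) (p : seq nat) : Prop :=
  fishburn p /\ forall s, Omega s -> avoids p s.

Definition inv_classes (Omega : seq nat -> Prop) (y : seq nat) : Prop :=
  is_cay y /\ exists s, Omega s /\ gamma y = gamma (perm_inv s).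

Definition gamma_modasc_avoid (Omega : seq nat -> Prop) (p : seq nat) : Prop :=
  exists x, [/\ modasc x, (forall y, inv_classes Omega y -> avoids x y) & gamma x = p].

(* Main.v *)
Require Import Defs.
From mathcomp Require Import all_boot zify.
Set Implicit Arguments. Unset Strict Implicit. Unset Printing Implicit Defensive.

Lemma count_split (T : Type) (a b : pred T) (l : seq T) :
  count a l = count (fun z => a z && b z) l + count (fun z => a z && ~~ b z) l.
Proof. elim: l => //= z l ->; case: (a z); case: (b z) => /=; lia. Qed.

Lemma count_lt_sub (T : eqType) (P Q : pred T) (l : seq T) z :
  (forall w, P w -> Q w) -> z \in l -> Q z -> ~~ P z -> count P l < count Q l.
Proof.
move=> sub zl Qz Pz.
rewrite (count_split Q P l).
have -> : count (fun w => Q w && P w) l = count P l.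
  by apply: eq_count => w; case Pw: (P w); rewrite ?andbT ?andbF ?sub.
have : 0 < count (fun w => Q w && ~~ P w) l.
  by rewrite -has_count; apply/hasP; exists z => //; rewrite Qz Pz.
lia.
Qed.

Definition glt (x : seq nat) (j i : nat) : bool :=
  (nth 0 x j < nth 0 x i) || ((nth 0 x j == nth 0 x i) && (i < j)).

Definition rank (x : seq nat) (i : nat) : nat :=
  count (fun j => glt x j i) (iota 0 (size x)).

Lemma glt_irr x i : glt x i i = false.
Proof. by rewrite /glt ltnn eqxx ltnn. Qed.

Lemma glt_trans x i j l : glt x i j -> glt x j l -> glt x i l.
Proof.
rewrite /glt => /orP[h1|/andP[/eqP e1 h1]] /orP[h2|/andP[/eqP e2 h2]]; apply/orP.
- left; lia.
- left; lia.
- left; lia.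
- right; apply/andP; split; [apply/eqP; lia | lia].
Qed.

Lemma glt_total x i j : i != j -> glt x i j || glt x j i.
Proof.
move=> ne; rewrite /glt.
case: (ltngtP (nth 0 x i) (nth 0 x j)) => h //=; rewrite ?orbT //.
by move: ne; rewrite neq_ltn orbC.
Qed.

Lemma glt_asym x i j : glt x i j -> glt x j i = false.
Proof.
move=> h; apply/negbTE/negP => h'.
by have := glt_trans h h'; rewrite glt_irr.
Qed.

Lemma rank_lt x i : i < size x -> rank x i < size x.
Proof.
move=> lt; rewrite /rank.
have := count_lt_sub (P := fun j => glt x j i) (Q := predT) (z := i) (l := iota 0 (size x)).
rewrite count_predT size_iota; apply => //.
  by rewrite mem_iota.
by rewrite glt_irr.
Qed.

Lemma rank_glt x i j : glt x j i -> j < size x -> rank x j < rank x i.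
Proof.
move=> h lt; rewrite /rank; apply: (count_lt_sub (z := j)).
- by move=> w hw; apply: glt_trans hw h.
- by rewrite mem_iota.
- done.
- by rewrite glt_irr.
Qed.

Lemma glt_rank x i j : i < size x -> j < size x -> rank x j < rank x i -> glt x j i.
Proof.
move=> li lj h.
have ne : j != i by apply/eqP => e; subst; lia.
case/orP: (glt_total x ne) => // g.
have := rank_glt g li; lia.
Qed.

Lemma gamma_rel_trans : transitive gamma_rel.
Proof.
move=> [a b] [c d] [e f]; rewrite /gamma_rel /=.
move=> /orP[h1|/andP[/eqP e1 h1]] /orP[h2|/andP[/eqP e2 h2]]; apply/orP.
- left; lia.
- left; lia.
- left; lia.
- right; apply/andP; split; [apply/eqP; lia | lia].
Qed.

Lemma gamma_rel_total : total gamma_rel.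
Proof.
move=> [a b] [c d]; rewrite /gamma_rel /=.
case: (ltngtP a c) => h //=; rewrite ?orbT //.
by apply/orP; lia.
Qed.

Lemma gamma_rel_anti p q : gamma_rel p q -> gamma_rel q p -> p = q.
Proof.
case: p q => [a b] [c d]; rewrite /gamma_rel /=.
move=> /orP[h1|/andP[/eqP e1 h1]] /orP[h2|/andP[/eqP e2 h2]]; try lia.
by subst; congr pair; lia.
Qed.

Lemma index_sorted (S : seq (nat * nat)) e :
  sorted gamma_rel S -> uniq S -> e \in S ->
  index e S = count (fun q => gamma_rel q e && (q != e)) S.
Proof.
elim: S => //= h S IH srt /andP[hS uS] eS.
have srt' : sorted gamma_rel S by move: srt; case: S {IH hS uS eS} => //= ? ? /andP[].
have allh : all (gamma_rel h) S.
  by apply: order_path_min => //; apply: gamma_rel_trans.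
case: eqP => [eh|neh].
  subst h; rewrite ?eqxx ?andbF /=.
  symmetry; apply/eqP; rewrite -leqn0 leqNgt -has_count; apply/hasP => -[q qS /andP[r1 r2]].
  move/allP: allh => /(_ q qS) r3.
  by move: r2; rewrite (gamma_rel_anti r1 r3) eqxx.
have eS' : e \in S by move: eS; rewrite inE => /orP[/eqP e0|//]; case: neh.
rewrite IH //.
have -> : gamma_rel h e by move/allP: allh; apply.
done.
Qed.

Lemma zipE (x : seq nat) :
  zip x (iota 1 (size x)) = map (fun j => (nth 0 x j, j.+1)) (iota 0 (size x)).
Proof.
apply: (@eq_from_nth _ (0,0)).
  by rewrite size_zip size_map !size_iota minnn.
move=> i; rewrite size_zip size_iota minnn => lt.
rewrite nth_zip ?size_iota // (nth_map 0) ?size_iota // !nth_iota //.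
Qed.

Lemma zip_uniq (x : seq nat) : uniq (zip x (iota 1 (size x))).
Proof.
rewrite zipE map_inj_in_uniq ?iota_uniq //.
by move=> a b _ _ [_ ->].
Qed.

Lemma size_gamma x : size (gamma x) = size x.
Proof. by rewrite /gamma size_map size_sort size_zip size_iota minnn. Qed.

Lemma gamma_perm x : perm_eq (gamma x) (iota 1 (size x)).
Proof.
rewrite /gamma.
have e : map snd (zip x (iota 1 (size x))) = iota 1 (size x).
  by rewrite -[LHS]/(unzip2 _) unzip2_zip // size_iota.
by rewrite -[X in perm_eq _ X]e; apply: perm_map; rewrite perm_sort.
Qed.

Lemma gamma_uniq x : uniq (gamma x).
Proof. by rewrite (perm_uniq (gamma_perm x)) iota_uniq. Qed.

Lemma gamma_rank x i : i < size x -> nth 0 (gamma x) (rank x i) = i.+1.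
Proof.
move=> lt.
set Z := zip x (iota 1 (size x)).
set S := sort gamma_rel Z.
have pS : perm_eq S Z by rewrite perm_sort.
have uS : uniq S by rewrite (perm_uniq pS) zip_uniq.
have sS : sorted gamma_rel S by apply: sort_sorted; apply: gamma_rel_total.
have eZ : (nth 0 x i, i.+1) \in Z by rewrite /Z zipE; apply/mapP; exists i; rewrite ?mem_iota.
have eS : (nth 0 x i, i.+1) \in S by rewrite (perm_mem pS).
have -> : rank x i = index (nth 0 x i, i.+1) S.
  rewrite index_sorted // ((permP pS) _) /Z zipE count_map /rank.
  apply: eq_in_count => j; rewrite mem_iota => /andP[_ lj] /=.
  rewrite /glt /gamma_rel /= xpair_eqE eqSS.
  case: (ltngtP (nth 0 x j) (nth 0 x i)) => h //=.
  case: (ltngtP i j) => h2 //=; rewrite ?andbT ?andbF //; apply/esym;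
    [apply/idP | apply/negP]; lia.
rewrite /gamma -/Z -/S (nth_map (0,0)) ?index_mem // nth_index //.
Qed.

Lemma gamma_nth x t : t < size x ->
  [/\ 0 < nth 0 (gamma x) t, (nth 0 (gamma x) t).-1 < size x &
      rank x (nth 0 (gamma x) t).-1 = t].
Proof.
move=> lt.
have mem : nth 0 (gamma x) t \in iota 1 (size x).
  by rewrite -(perm_mem (gamma_perm x)) mem_nth ?size_gamma.
move: mem; rewrite mem_iota => /andP[h1 h2].
split => //; first lia.
have li : (nth 0 (gamma x) t).-1 < size x by lia.
have := gamma_rank li; rewrite prednK // => e.
apply/eqP; rewrite -(nth_uniq 0 _ _ (gamma_uniq x)) ?size_gamma ?rank_lt //.
by rewrite e.
Qed.

Lemma gamma_char x q : size q = size x ->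
  (forall i, i < size x -> nth 0 q (rank x i) = i.+1) -> q = gamma x.
Proof.
move=> sz h; apply: (@eq_from_nth _ 0); first by rewrite size_gamma.
move=> t; rewrite sz => lt.
have [h1 h2 h3] := gamma_nth lt.
by rewrite -[in LHS]h3 h // prednK.
Qed.

Definition ins k (e : nat) (q : seq nat) := take k q ++ e :: drop k q.

Lemma nth_ins k e q t : k <= size q ->
  nth 0 (ins k e q) t = if t < k then nth 0 q t else if t == k then e else nth 0 q t.-1.
Proof.
move=> kq; rewrite /ins nth_cat size_takel //.
case: ltnP => h1; first by rewrite nth_take.
case: eqP => [->|ne]; first by rewrite subnn.
have -> : t - k = (t - k).-1.+1 by lia.
rewrite /= nth_drop; congr nth; lia.
Qed.

Lemma count_nth (P : pred nat) (v : seq nat) :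
  count P v = count (fun j => P (nth 0 v j)) (iota 0 (size v)).
Proof. by rewrite -{1}(mkseq_nth 0 v) /mkseq count_map. Qed.

Lemma rank_rcons_old v a i : i < size v ->
  rank (rcons v a) i = rank v i + (a <= nth 0 v i).
Proof.
move=> lt; rewrite /rank size_rcons -addn1 iotaD count_cat /= addn0 add0n.
congr addn.
  apply: eq_in_count => j; rewrite mem_iota => /andP[_ lj].
  by rewrite /glt !nth_rcons lj lt.
rewrite /glt !nth_rcons ltnn eqxx lt andbT.
by rewrite (leq_eqVlt a) orbC.
Qed.

Lemma rank_rcons_new v a :
  rank (rcons v a) (size v) = count (fun c => c < a) v.
Proof.
rewrite /rank size_rcons -addn1 iotaD count_cat /= addn0 add0n glt_irr addn0.
rewrite [RHS]count_nth; apply: eq_in_count => j; rewrite mem_iota => /andP[_ lj].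
rewrite /glt !nth_rcons lj ltnn eqxx.
case: ltngtP => //= _; apply/negbTE; lia.
Qed.

Lemma rank_ge v a i : i < size v ->
  (count (fun c => c < a) v <= rank v i) = (a <= nth 0 v i).
Proof.
move=> lt; rewrite count_nth /rank.
case: (leqP a (nth 0 v i)) => h.
  apply: sub_count => j /= hj; rewrite /glt; apply/orP; left; lia.
apply/negbTE; rewrite -ltnNge.
apply: (count_lt_sub (z := i)).
- move=> w; rewrite /glt => /orP[h1|/andP[/eqP h1 _]]; lia.
- by rewrite mem_iota.
- done.
- by rewrite glt_irr.
Qed.

Lemma gamma_rcons v a :
  gamma (rcons v a) = ins (count (fun c => c < a) v) (size v).+1 (gamma v).
Proof.
have kq : count (fun c => c < a) v <= size (gamma v) by rewrite size_gamma count_size.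
symmetry; apply: gamma_char.
  rewrite /ins size_cat /= size_takel // size_drop size_gamma size_rcons.
  move: kq; rewrite size_gamma; lia.
move=> i; rewrite size_rcons ltnS leq_eqVlt => /orP[/eqP ->|lt].
  by rewrite rank_rcons_new nth_ins // ltnn eqxx.
rewrite rank_rcons_old // nth_ins //.
have := rank_ge a lt.
case: (leqP a (nth 0 v i)) => h /= e.
  rewrite addn1 ifF; last by lia.
  rewrite ifF; last by apply/negbTE; lia.
  by rewrite /= gamma_rank.
by rewrite addn0 ifT ?gamma_rank //; lia.
Qed.

Definition bumpf (a c : nat) := if a <= c then c.+1 else c.

Lemma bumpf_lt a c d : (bumpf a c < bumpf a d) = (c < d).
Proof. rewrite /bumpf; case: ifP; case: ifP => h1 h2; apply/idP/idP; lia. Qed.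

Lemma bumpf_eq a c d : (bumpf a c == bumpf a d) = (c == d).
Proof. rewrite /bumpf; case: ifP; case: ifP => h1 h2; apply/idP/idP; lia. Qed.

Lemma nth_bump a v j : j < size v -> nth 0 (bump_from a v) j = bumpf a (nth 0 v j).
Proof. by move=> lt; rewrite /bump_from (nth_map 0). Qed.

Lemma size_bump a v : size (bump_from a v) = size v.
Proof. by rewrite size_map. Qed.

Lemma rank_bump a v i : rank (bump_from a v) i = rank v i.
Proof.
rewrite /rank size_bump; apply: eq_in_count => j; rewrite mem_iota => /andP[_ lj].
rewrite /glt.
case: (ltnP i (size v)) => li.
  by rewrite !nth_bump // bumpf_lt bumpf_eq.
have -> : (i < j) = false by apply/negbTE; lia.
rewrite (nth_default 0 li) (@nth_default _ 0 (bump_from a v) i) ?size_bump //.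
by rewrite !andbF !orbF !ltn0.
Qed.

Lemma gamma_bump a v : gamma (bump_from a v) = gamma v.
Proof.
symmetry; apply: gamma_char; first by rewrite size_gamma size_bump.
by move=> i; rewrite size_bump rank_bump; apply: gamma_rank.
Qed.

Lemma count_lt_iota c m n : count (fun x => x < c) (iota m n) = minn (c - m) n.
Proof.
elim: n m => [|n IH] m /=; first by rewrite minn0.
rewrite IH; case: (ltnP m c) => h /=; lia.
Qed.

Lemma perm_inv_E s : perm_inv s = map (fun b => (index b.+1 s).+1) (iota 0 (size s)).
Proof.
rewrite /perm_inv -[1]/(1 + 0) iotaDl -map_comp; apply: eq_map => b /=.
by rewrite add1n.
Qed.

Lemma size_perm_inv s : size (perm_inv s) = size s.
Proof. by rewrite size_map size_iota. Qed.

Lemma perm_inv_perm s : is_perm s -> perm_eq (perm_inv s) (iota 1 (size s)).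
Proof.
rewrite /is_perm => ps.
have memS j : (j \in s) = (j \in iota 1 (size s)) by rewrite (perm_mem ps).
have up : uniq (perm_inv s).
  rewrite /perm_inv map_inj_in_uniq ?iota_uniq // => a b ha hb [] e.
  by rewrite -(nth_index 0 (s := s) (x := a)) ?memS // e nth_index ?memS.
have sub : {subset perm_inv s <= iota 1 (size s)}.
  move=> c /mapP[j hj ->]; rewrite mem_iota; apply/andP; split => //.
  by rewrite add1n ltnS index_mem memS.
have [_ eqm] := uniq_min_size up sub (eq_leq (esym (etrans (size_perm_inv s) (esym (size_iota 1 (size s)))))).
by apply: uniq_perm => //; rewrite iota_uniq.
Qed.

Lemma nth_perm_inv s i : i < size s ->
  nth 0 (perm_inv s) i = (index i.+1 s).+1.
Proof. by move=> lt; rewrite perm_inv_E (nth_map 0) ?size_iota // nth_iota. Qed.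

Lemma gamma_perm_inv s : is_perm s -> gamma (perm_inv s) = s.
Proof.
move=> ps; have pw := perm_inv_perm ps.
have uw : uniq (perm_inv s) by rewrite (perm_uniq pw) iota_uniq.
have memS j : (j \in s) = (j \in iota 1 (size s)) by rewrite (perm_mem ps).
symmetry; apply: gamma_char; first by rewrite size_perm_inv.
move=> i; rewrite size_perm_inv => lt.
set w := perm_inv s.
have -> : rank w i = count (fun c => c < nth 0 w i) w.
  rewrite /rank [RHS]count_nth; apply: eq_in_count => j; rewrite mem_iota => /andP[_ lj].
  rewrite /glt; case: eqP => [e|] /=; last by rewrite orbF.
  have li' : i < size w by rewrite size_perm_inv.
  have lj' : j < size w by [].
  have ji : j = i by apply/eqP; rewrite -(nth_uniq 0 lj' li' uw) e.
  by rewrite ji !ltnn.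
rewrite ((permP pw) _) count_lt_iota /w nth_perm_inv //.
have hi : index i.+1 s < size s by rewrite index_mem memS mem_iota; lia.
have -> : minn ((index i.+1 s).+1 - 1) (size s) = index i.+1 s by lia.
by rewrite nth_index // memS mem_iota; apply/andP; split; lia.
Qed.

Definition stdS (w : seq nat) := sort leq (undup w).
Definition std (w : seq nat) := map (fun c => (index c (stdS w)).+1) w.

Lemma stdS_sorted w : sorted ltn (stdS w).
Proof.
rewrite ltn_sorted_uniq_leq sort_sorted ?andbT; last by move=> a b; apply: leq_total.
by rewrite sort_uniq undup_uniq.
Qed.

Lemma mem_stdS w c : (c \in stdS w) = (c \in w).
Proof. by rewrite mem_sort mem_undup. Qed.

Lemma sorted_nth_lt (L : seq nat) a b : sorted ltn L -> a < size L -> b < size L ->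
  (nth 0 L a < nth 0 L b) = (a < b).
Proof.
move=> srt la lb.
have hom := sorted_ltn_nth ltn_trans 0 srt.
case: (ltngtP a b) => h.
- by apply: hom.
- by apply/negbTE; rewrite -leqNgt ltnW //; apply: hom.
- by rewrite h ltnn.
Qed.

Lemma sorted_nth_eq (L : seq nat) a b : sorted ltn L -> a < size L -> b < size L ->
  (nth 0 L a == nth 0 L b) = (a == b).
Proof.
move=> srt la lb.
case: (ltngtP a b) => h.
- by apply/negbTE; rewrite neq_ltn (sorted_nth_lt srt la lb) h.
- by apply/negbTE; rewrite neq_ltn (sorted_nth_lt srt lb la) h orbT.
- by rewrite h eqxx.
Qed.

Lemma std_lt w c d : c \in w -> d \in w ->
  ((index c (stdS w)).+1 < (index d (stdS w)).+1) = (c < d).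
Proof.
move=> cw dw; rewrite ltnS.
have cS : c \in stdS w by rewrite mem_stdS.
have dS : d \in stdS w by rewrite mem_stdS.
have := sorted_nth_lt (stdS_sorted w) (a := index c (stdS w)) (b := index d (stdS w)).
by rewrite !index_mem !nth_index // => ->.
Qed.

Lemma std_eq w c d : c \in w -> d \in w ->
  ((index c (stdS w)).+1 == (index d (stdS w)).+1) = (c == d).
Proof.
move=> cw dw; rewrite eqSS.
have cS : c \in stdS w by rewrite mem_stdS.
have dS : d \in stdS w by rewrite mem_stdS.
have := sorted_nth_eq (stdS_sorted w) (a := index c (stdS w)) (b := index d (stdS w)).
by rewrite !index_mem !nth_index // => ->.
Qed.

Lemma wmax_le (y : seq nat) B : (forall c, c \in y -> c <= B) -> wmax y <= B.
Proof.
elim: y => //= c y IH h; rewrite geq_max h ?inE ?eqxx //.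
by apply: IH => d hd; apply: h; rewrite inE hd orbT.
Qed.

Lemma std_cay w : is_cay (std w).
Proof.
apply/andP; split.
  by apply/allP => c /mapP[d _ ->].
apply/allP => m; rewrite mem_iota => /andP[m1 m2].
have : wmax (std w) <= size (stdS w).
  apply: wmax_le => c /mapP[d dw ->].
  by rewrite index_mem mem_stdS.
move=> hm.
have lm : m.-1 < size (stdS w) by lia.
set c := nth 0 (stdS w) m.-1.
have cS : c \in stdS w by apply: mem_nth.
apply/mapP; exists c; first by rewrite -mem_stdS.
rewrite index_uniq; first lia.
  done.
by rewrite sort_uniq undup_uniq.
Qed.

Lemma mono_I (I : seq nat) a b : sorted ltn I -> a < size I -> b < size I ->
  (nth 0 I a < nth 0 I b) = (a < b) /\ (nth 0 I a == nth 0 I b) = (a == b).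
Proof. by move=> s la lb; rewrite sorted_nth_lt // sorted_nth_eq. Qed.

Lemma glt_transfer x y I :
  size I = size y -> sorted ltn I ->
  (forall s t, s < size y -> t < size y ->
        (nth 0 x (nth 0 I s) < nth 0 x (nth 0 I t)) = (nth 0 y s < nth 0 y t)
        /\ (nth 0 x (nth 0 I s) == nth 0 x (nth 0 I t)) = (nth 0 y s == nth 0 y t)) ->
  forall a b, a < size y -> b < size y -> glt y a b = glt x (nth 0 I a) (nth 0 I b).
Proof.
move=> sz srt cond a b la lb; rewrite /glt.
have [c1 c2] := cond a b la lb.
have [m1 _] := mono_I srt (a := b) (b := a) ltac:(lia) ltac:(lia).
by rewrite c1 c2 m1.
Qed.

Lemma glt_rankE x i j : i < size x -> j < size x -> glt x j i = (rank x j < rank x i).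
Proof.
move=> li lj; apply/idP/idP => h; first by apply: rank_glt.
by apply: glt_rank.
Qed.

Lemma path_map_iota (f : nat -> nat) k m :
  (forall t, m <= t -> t < m + k -> f t < f t.+1) -> path ltn (f m) (map f (iota m.+1 k)).
Proof.
elim: k m => [|k IH] m h //=.
apply/andP; split; first by apply: h; lia.
by apply: IH => t h1 h2; apply: h; lia.
Qed.

Lemma sorted_map_iota (f : nat -> nat) k :
  (forall t, t.+1 < k -> f t < f t.+1) -> sorted ltn (map f (iota 0 k)).
Proof.
case: k => // k h /=; apply: path_map_iota => t _ lt; apply: h; lia.
Qed.

Lemma all_nth_lt (I : seq nat) n a : all (fun i => i < n) I -> a < size I -> nth 0 I a < n.
Proof. by move=> /allP h la; apply: h; apply: mem_nth. Qed.

Lemma contains_gamma x y : contains x y -> contains (gamma x) (gamma y).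
Proof.
case=> I [sz srt alt cond].
set k := size y.
pose pos t := (nth 0 (gamma y) t).-1.
have posP t : t < k -> [/\ 0 < nth 0 (gamma y) t, pos t < k & rank y (pos t) = t].
  by move=> lt; apply: gamma_nth.
have Ilt a : a < k -> nth 0 I a < size x by move=> la; apply: all_nth_lt alt _; rewrite sz.
have gtr := glt_transfer sz srt cond.
pose J := map (fun t => rank x (nth 0 I (pos t))) (iota 0 k).
exists J; split.
- by rewrite size_map size_iota size_gamma.
- apply: sorted_map_iota => t lt.
  have [_ p1 r1] := posP t ltac:(lia).
  have [_ p2 r2] := posP t.+1 lt.
  apply: rank_glt; last by apply: Ilt.
  rewrite -gtr //; apply: glt_rank => //; lia.
- apply/allP => r /mapP[t]; rewrite mem_iota => /andP[_ lt] ->.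
  rewrite size_gamma; apply: rank_lt; apply: Ilt; have [] := posP t lt; done.
- move=> t t'; rewrite size_gamma => lt lt'.
  rewrite !(nth_map 0) ?size_iota // !nth_iota //= !add0n.
  have [q1 p1 r1] := posP t lt.
  have [q2 p2 r2] := posP t' lt'.
  rewrite !gamma_rank ?Ilt //.
  rewrite -(prednK q1) -(prednK q2) -/(pos t) -/(pos t') !ltnS !eqSS.
  have [m1 m2] := mono_I srt (a := pos t) (b := pos t') ltac:(lia) ltac:(lia).
  by rewrite m1 m2.
Qed.

Lemma gamma_contains x s : is_perm s -> contains (gamma x) s ->
  exists y, [/\ is_cay y, gamma y = s & contains x y].
Proof.
move=> ps [J [sz srt alt cond]].
set k := size s.
have memS j : (j \in s) = (j \in iota 1 k) by rewrite (perm_mem ps).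
have us : uniq s by rewrite (perm_uniq ps) iota_uniq.
pose P t := (nth 0 (gamma x) (nth 0 J t)).-1.
have Jlt t : t < k -> nth 0 J t < size x.
  by move=> lt; rewrite -(size_gamma x); apply: all_nth_lt alt _; rewrite sz.
have PP t : t < k -> [/\ 0 < nth 0 (gamma x) (nth 0 J t), P t < size x & rank x (P t) = nth 0 J t].
  by move=> lt; apply: gamma_nth; apply: Jlt.
pose tinv a := index a.+1 s.
have tP a : a < k -> tinv a < k /\ nth 0 s (tinv a) = a.+1.
  move=> la; have m : a.+1 \in s by rewrite memS mem_iota; apply/andP; split; lia.
  by split; [rewrite /tinv index_mem | rewrite nth_index].
pose I := map (fun a => P (tinv a)) (iota 0 k).
have szI : size I = k by rewrite size_map size_iota.
have nthI a : a < k -> nth 0 I a = P (tinv a).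
  by move=> la; rewrite (nth_map 0) ?size_iota // nth_iota.
have srtI : sorted ltn I.
  apply: sorted_map_iota => a la.
  have [t1 s1] := tP a ltac:(lia).
  have [t2 s2] := tP a.+1 la.
  have [c1 _] := cond (tinv a) (tinv a.+1) t1 t2.
  rewrite s1 s2 ltnS leqnn in c1.
  have [q1 _ _] := PP _ t1.
  have [q2 _ _] := PP _ t2.
  rewrite /P; move: c1; rewrite -(prednK q1) -(prednK q2) ltnS; done.
have Ilt a : a < k -> nth 0 I a < size x.
  by move=> la; rewrite nthI //; have [t1 _] := tP a la; have [] := PP _ t1.
pose w := map (nth 0 x) I.
pose y := std w.
have szy : size y = k by rewrite size_map size_map szI.
have nthy a : a < k -> nth 0 y a = (index (nth 0 x (nth 0 I a)) (stdS w)).+1.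
  move=> la; rewrite /y /std (nth_map 0 0); last by rewrite size_map szI.
  by rewrite /w (nth_map 0 0) ?szI.
have inw a : a < k -> nth 0 x (nth 0 I a) \in w.
  by move=> la; apply/mapP; exists (nth 0 I a) => //; apply: mem_nth; rewrite szI.
have condy : forall a b, a < size y -> b < size y ->
   (nth 0 x (nth 0 I a) < nth 0 x (nth 0 I b)) = (nth 0 y a < nth 0 y b)
   /\ (nth 0 x (nth 0 I a) == nth 0 x (nth 0 I b)) = (nth 0 y a == nth 0 y b).
  move=> a b; rewrite szy => la lb; rewrite !nthy //.
  by rewrite std_lt ?inw // std_eq ?inw.
have cxy : contains x y.
  exists I; split => //; first by rewrite szI szy.
  by apply/allP => i /mapP[a]; rewrite mem_iota => /andP[_ la] ->; rewrite -nthI ?Ilt.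
exists y; split => //; first by apply: std_cay.
symmetry; apply: gamma_char; first by rewrite szy.
move=> a; rewrite szy => la.
have gtr := glt_transfer (I := I) (x := x) (y := y) ltac:(by rewrite szI szy) srtI condy.
suff -> : rank y a = tinv a by have [] := tP a la.
rewrite /rank szy.
have [ta _] := tP a la.
transitivity (count (fun b => tinv b < tinv a) (iota 0 k)).
  apply: eq_in_count => b; rewrite mem_iota => /andP[_ lb].
  have [tb _] := tP b lb.
  rewrite gtr ?szy // glt_rankE ?Ilt // !nthI //.
  have [_ _ r1] := PP _ ta.
  have [_ _ r2] := PP _ tb.
  by rewrite r1 r2 sorted_nth_lt // sz.
transitivity (count (fun c => c < (tinv a).+1) (perm_inv s)).
  by rewrite perm_inv_E count_map.
rewrite ((permP (perm_inv_perm ps)) _) count_lt_iota; lia.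
Qed.

Definition leftmost (x : seq nat) j := forall i, i < j -> nth 0 x i != nth 0 x j.
Definition Pinv x := forall j, 0 < j < size x -> leftmost x j -> nth 0 x j.-1 < nth 0 x j.
Definition Qinv x := forall j, 0 < j < size x -> nth 0 x j.-1 < nth 0 x j -> leftmost x j.

Lemma asc_cons2 h h' r : asc [:: h, h' & r] = (h < h') + asc (h' :: r).
Proof. by []. Qed.

Lemma asc_rcons v a : 0 < size v -> asc (rcons v a) = asc v + (last 0 v < a).
Proof.
case: v => // h t _; elim: t h => [|h' t IH] h; first by rewrite /asc /=; lia.
by rewrite rcons_cons rcons_cons asc_cons2 -rcons_cons IH //= asc_cons2; lia.
Qed.

Lemma asc_bump a v : asc (bump_from a v) = asc v.
Proof.
case: v => // h t; elim: t h => [|h' t IH] h //.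
by rewrite /bump_from map_cons map_cons asc_cons2 -map_cons IH asc_cons2 bumpf_lt.
Qed.

Lemma leftmost_rcons_old u z j : j < size u -> leftmost (rcons u z) j <-> leftmost u j.
Proof.
move=> lj; rewrite /leftmost; split => h i li.
  by have := h i li; rewrite !nth_rcons lj ifT //; lia.
by rewrite !nth_rcons lj ifT ?h //; lia.
Qed.

Lemma leftmost_rcons_new u z : leftmost (rcons u z) (size u) <-> z \notin u.
Proof.
rewrite /leftmost; split => h.
  apply/negP => /(nthP 0) [i li e].
  by have := h i li; rewrite !nth_rcons li ltnn eqxx e eqxx.
move=> i li; rewrite !nth_rcons li ltnn eqxx.
by apply/eqP => e; move/negP: h; apply; rewrite -e mem_nth.
Qed.

Lemma Pinv_rcons u z : 0 < size u -> Pinv u -> (z \notin u -> last 0 u < z) -> Pinv (rcons u z).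
Proof.
move=> su pu hz j; rewrite size_rcons => /andP[j0 jn].
rewrite ltnS leq_eqVlt in jn; case/orP: jn => [/eqP ->|jn].
  move/leftmost_rcons_new => /hz; rewrite !nth_rcons ltnn eqxx ifT; last by lia.
  by rewrite nth_last.
move/(leftmost_rcons_old z jn) => /pu; rewrite !nth_rcons jn ifT; last by lia.
by apply; rewrite j0.
Qed.

Lemma Qinv_rcons u z : 0 < size u -> Qinv u -> (last 0 u < z -> z \notin u) -> Qinv (rcons u z).
Proof.
move=> su qu hz j; rewrite size_rcons => /andP[j0 jn].
rewrite ltnS leq_eqVlt in jn; case/orP: jn => [/eqP ->|jn].
  rewrite !nth_rcons ltnn eqxx ifT; last by lia.
  by rewrite nth_last => /hz /leftmost_rcons_new.
rewrite !nth_rcons jn ifT; last by lia.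
by move=> h; apply/(leftmost_rcons_old z jn); apply: qu => //; rewrite j0.
Qed.

Lemma leftmost_bump a v j : j < size v -> leftmost (bump_from a v) j <-> leftmost v j.
Proof.
move=> lj; rewrite /leftmost; split => h i li.
  by have := h i li; rewrite !nth_bump // ?bumpf_eq //; lia.
by rewrite !nth_bump ?bumpf_eq ?h //; lia.
Qed.

Lemma Pinv_bump a v : Pinv v -> Pinv (bump_from a v).
Proof.
move=> pv j; rewrite size_bump => /andP[j0 jn] /(leftmost_bump a jn) h.
by rewrite !nth_bump ?bumpf_lt; [apply: pv => //; rewrite j0 | lia | lia].
Qed.

Lemma Qinv_bump a v : Qinv v -> Qinv (bump_from a v).
Proof.
move=> qv j; rewrite size_bump => /andP[j0 jn].
rewrite !nth_bump ?bumpf_lt; [|lia|lia] => h.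
by apply/(leftmost_bump a jn); apply: qv => //; rewrite j0.
Qed.

Definition Inv x := [/\ forall c, c \in x -> 0 < c <= (asc x).+1,
                        forall c, 0 < c <= (asc x).+1 -> c \in x,
                        Pinv x & Qinv x].

Lemma last_mem (v : seq nat) : 0 < size v -> last 0 v \in v.
Proof. by case: v => // h t _; rewrite /= mem_last. Qed.

Lemma modasc_inv x : modasc x -> 0 < size x -> Inv x.
Proof.
elim=> {x} //.
- move=> _; split.
  + by move=> c; rewrite inE => /eqP ->.
  + by move=> c h; rewrite inE; apply/eqP; rewrite /asc /= in h; lia.
  + by move=> j /= h; lia.
  + by move=> j /= h; lia.
- move=> v a mv IH sv a1 al _.
  have [B S P Q] := IH sv.
  have lv := last_mem sv.
  have ain : a \in v by apply: S; have := B _ lv; lia.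
  rewrite /Inv asc_rcons //.
  have -> : (last 0 v < a) = false by apply/negbTE; lia.
  rewrite addn0; split.
  + by move=> c; rewrite mem_rcons inE => /orP[/eqP ->|/B //]; apply: B.
  + by move=> c /S h; rewrite mem_rcons inE h orbT.
  + by apply: Pinv_rcons => //; rewrite ain.
  + by apply: Qinv_rcons => // h; lia.
- move=> v a mv IH sv la aa _.
  have [B S P Q] := IH sv.
  have lv := last_mem sv.
  have sb : 0 < size (bump_from a v) by rewrite size_bump.
  have lb : last 0 (bump_from a v) = last 0 v.
    rewrite -!nth_last size_bump nth_bump; last by lia.
    rewrite nth_last /bumpf ifF //; apply/negbTE; rewrite -ltnNge //.
  have anotin : a \notin bump_from a v.
    apply/negP => /mapP[c hc]; rewrite /bumpf; case: ifP => h e; lia.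
  rewrite /Inv asc_rcons // asc_bump lb la addn1; split.
  + move=> c; rewrite mem_rcons inE => /orP[/eqP ->|/mapP[d hd ->]]; first by lia.
    by have := B _ hd; rewrite /bumpf; case: ifP => _; lia.
  + move=> c hc; rewrite mem_rcons inE.
    case: (ltngtP c a) => h; first last.
    * by rewrite h ?eqxx.
    * apply/orP; right; apply/mapP; exists c.-1; first by apply: S; lia.
      by rewrite /bumpf ifT; lia.
    * apply/orP; right; apply/mapP; exists c; first by apply: S; lia.
      by rewrite /bumpf ifF //; apply/negbTE; lia.
  + apply: Pinv_rcons => //; first by apply: Pinv_bump.
    by rewrite lb.
  + by apply: Qinv_rcons => //; apply: Qinv_bump.
Qed.

Lemma fish_gamma x : Pinv x -> fishburn (gamma x).
Proof.
move=> px; split; first by rewrite /is_perm size_gamma gamma_perm.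
move=> t k tk; rewrite size_gamma => kn lt e.
have [q1 l1 r1] := gamma_nth (x := x) (t := t) ltac:(lia).
have [q2 l2 r2] := gamma_nth (x := x) (t := t.+1) ltac:(lia).
have [q3 l3 r3] := gamma_nth (x := x) (t := k) ltac:(lia).
set j := (nth 0 (gamma x) t).-1 in l1 r1.
set j' := (nth 0 (gamma x) t.+1).-1 in l2 r2.
set m := (nth 0 (gamma x) k).-1 in l3 r3.
have jj' : j < j' by rewrite /j /j'; lia.
have mj : m.+1 = j by move: q3; rewrite /m /j e => h; rewrite prednK.
have g1 : glt x j j' by rewrite glt_rankE // r1 r2.
have g2 : glt x j m by rewrite glt_rankE // r1 r3; lia.
have x1 : nth 0 x j < nth 0 x j'.
  by move: g1; rewrite /glt => /orP[//|/andP[_ h]]; lia.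
have x2 : nth 0 x j <= nth 0 x m.
  by move: g2; rewrite /glt => /orP[h|/andP[/eqP h _]]; lia.
have lm : leftmost x j.
  move=> i li; apply/eqP => ei.
  have g3 : glt x j i by rewrite /glt ei eqxx li orbT.
  have g4 : glt x i j' by rewrite /glt ei x1.
  rewrite glt_rankE // in g3; last by lia.
  rewrite glt_rankE // in g4; last by lia.
  lia.
have := px j ltac:(apply/andP; split; lia) lm.
move: x2; rewrite -mj /=; lia.
Qed.

Lemma extend v a : modasc v -> 0 < size v -> 1 <= a -> a <= (asc v).+2 ->
  exists x, modasc x /\ gamma x = ins (count (fun c => c < a) v) (size v).+1 (gamma v).
Proof.
move=> mv sv a1 a2.
case: (leqP a (last 0 v)) => h.
  exists (rcons v a); split; first by apply: modasc_rep.
  by rewrite gamma_rcons.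
exists (rcons (bump_from a v) a); split; first by apply: modasc_new.
rewrite gamma_rcons gamma_bump size_bump /bump_from count_map.
congr ins; apply: eq_count => c /=; rewrite /bumpf; case: ifP => hc /=; apply/idP/idP; lia.
Qed.

Lemma perm_single q : perm_eq q [:: 1] -> q = [:: 1].
Proof.
move=> pq; have := perm_size pq; case: q pq => [|c [|]] //= pq _.
by have := perm_mem pq c; rewrite !inE eqxx => /esym/eqP ->.
Qed.

Lemma iota_rcons m n : iota m n.+1 = rcons (iota m n) (m + n).
Proof. by rewrite -cats1 -addn1 iotaD. Qed.

Lemma fish_surj n : forall p, size p = n -> fishburn p -> exists x, modasc x /\ gamma x = p.
Proof.
elim: n => [|n IH] p sp [pp fp].
  exists [::]; split; first by constructor.
  move: sp pp fp; case: p => // _ _ _.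
case: (posnP n) => [n0|npos].
  subst n; exists [:: 1]; split; first by constructor.
  move: pp; rewrite /is_perm sp /= => /perm_single ->.
  by apply: perm_single; apply: (gamma_perm [:: 1]).
set N := n.+1.
have memP j : (j \in p) = (j \in iota 1 n.+1) by rewrite (perm_mem pp) sp.
have up : uniq p by rewrite (perm_uniq pp) iota_uniq.
have Np : N \in p by rewrite memP mem_iota; apply/andP; split; lia.
set k := index N p.
have kn : k < n.+1 by rewrite -sp index_mem.
have pk : nth 0 p k = N by rewrite nth_index.
set q := take k p ++ drop k.+1 p.
have sq : size q = n by rewrite size_cat size_takel ?size_drop; lia.
have nthq i : nth 0 q i = nth 0 p (if i < k then i else i.+1).
  rewrite nth_cat size_takel; last by lia.
  case: ifP => h; first by rewrite nth_take.
  rewrite nth_drop; congr nth; lia.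
have qrem : q = rem N p by rewrite remE.
have pq : is_perm q.
  rewrite /is_perm sq qrem -(perm_cons N).
  have e1 : perm_eq (N :: rem N p) p by rewrite perm_sym perm_to_rem.
  apply: perm_trans e1 _.
  have e2 : iota 1 (size p) = rcons (iota 1 n) N by rewrite sp iota_rcons add1n.
  move: pp; rewrite /is_perm e2 => pp.
  exact: perm_trans pp (permEl (perm_rcons N (iota 1 n))).
have pbound i : i < n.+1 -> 0 < nth 0 p i <= N.
  move=> li; have : nth 0 p i \in p by apply: mem_nth; rewrite sp.
  by rewrite memP mem_iota => /andP[h1 h2]; rewrite /N; lia.
have pneq i : i < n.+1 -> i != k -> nth 0 p i < N.
  move=> li ne; have := pbound i li => /andP[h0].
  rewrite leq_eqVlt => /orP[/eqP e|//].
  have li' : i < size p by rewrite sp.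
  have lk : k < size p by rewrite sp.
  by move: ne; rewrite -(nth_uniq 0 li' lk up) pk e eqxx.
have fq : fishburn q.
  split => // i m im; rewrite sq => mn; rewrite !nthq.
  case: (ltnP i.+1 k) => h1.
    have -> : (i < k) = true by lia.
    move=> lt.
    by case: ifP => hm; apply: fp => //; rewrite ?sp; lia.
  have -> : (m < k) = false by lia.
  case: (ltnP i k) => h2 lt.
    apply: fp; rewrite ?sp; try lia.
    have -> : i.+1 = k by lia.
    by rewrite pk; apply: pneq; lia.
  by apply: fp => //; rewrite ?sp; lia.
have [v [mv gv]] := IH q sq fq.
have sv : size v = n by rewrite -(size_gamma v) gv.
have [B S Pv Qv] := modasc_inv mv ltac:(lia).
have pins : p = ins k N q.
  have stk : size (take k p) = k by rewrite size_takel // sp; lia.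
  have e1 : take k (take k p ++ drop k.+1 p) = take k p.
    by rewrite takel_cat ?stk // take_oversize ?stk.
  have e2 : drop k (take k p ++ drop k.+1 p) = drop k.+1 p.
    by rewrite drop_cat stk ltnn subnn drop0.
  rewrite /ins /q e1 e2.
  by rewrite -pk -drop_nth ?sp // cat_take_drop.
suff [a [a1 a2 ca]] : exists a, [/\ 1 <= a, a <= (asc v).+2 & count (fun c => c < a) v = k].
  have [x [mx gx]] := extend mv ltac:(lia) a1 a2.
  by exists x; split => //; rewrite gx ca sv gv pins.
case: (posnP k) => [k0|kpos].
  exists 1; split => //.
  rewrite k0; apply/eqP; rewrite -leqn0 leqNgt -has_count; apply/hasPn => c cv.
  by have := B c cv; lia.
case: (ltnP k n) => kn'; last first.
  exists (asc v).+2; split => //.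
  have -> : k = size v by lia.
  by apply/eqP; rewrite -all_count; apply/allP => c cv; have := B c cv; lia.
have [b0 jl rj] := gamma_nth (x := v) (t := k.-1) ltac:(lia).
set j := (nth 0 (gamma v) k.-1).-1 in jl rj.
have bq : nth 0 (gamma v) k.-1 = j.+1 by rewrite /j prednK.
have lm : leftmost v j.
  case: (posnP j) => [j0 | jpos]; first by move=> i; rewrite j0.
  set r := rank v j.-1.
  have lr : r < n by rewrite -sv; apply: rank_lt; lia.
  have qr : nth 0 q r = j.
    have := @gamma_rank v j.-1 ltac:(lia); rewrite gv prednK // => h; exact: h.
  have rk : r < k.-1.
    case: (ltngtP r k.-1) => // h.
      move: qr; rewrite nthq ifF; last by apply/negbTE; lia.
      have pk1 : nth 0 p k.-1 = j.+1 by rewrite -bq gv nthq ifT //; lia.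
      move=> e.
      have lt1 : nth 0 p k.-1 < nth 0 p k.-1.+1.
        by rewrite prednK // pk; apply: pneq; lia.
      by have := fp k.-1 r.+1 ltac:(lia) ltac:(rewrite sp; lia) lt1; rewrite e pk1.
    by move: qr; rewrite h -gv bq => e; exfalso; lia.
  have g : glt v j.-1 j by apply: glt_rank; rewrite ?sv ?rj; lia.
  have hlt : nth 0 v j.-1 < nth 0 v j.
    by move: g; rewrite /glt => /orP[//|/andP[_ h]]; lia.
  have hj : 0 < j < size v by rewrite jpos jl.
  exact: Qv _ hj hlt.
have vjm : nth 0 v j \in v by apply: mem_nth.
exists (nth 0 v j).+1; split => //; first by have := B _ vjm; lia.
rewrite count_nth.
transitivity (rank v j).+1; last by rewrite rj prednK.
rewrite (count_split _ (fun i => i != j)).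
have e1 : count (fun i => (nth 0 v i < (nth 0 v j).+1) && (i != j)) (iota 0 (size v)) = rank v j.
  rewrite /rank; apply: eq_in_count => i; rewrite mem_iota => /andP[_ li].
  rewrite /glt; case: (ltngtP i j) => hij /=.
  - have := lm i hij; rewrite andbT andbF orbF ltnS leq_eqVlt => /negbTE ->.
    done.
  - by rewrite !andbT ltnS leq_eqVlt orbC.
  - by rewrite hij !andbF ltnn.
have e2 : count (fun i => (nth 0 v i < (nth 0 v j).+1) && ~~ (i != j)) (iota 0 (size v)) = 1.
  transitivity (count (pred1 j) (iota 0 (size v))).
    apply: eq_in_count => i _ /=; rewrite negbK; case: eqP => [->|] /=; last by rewrite andbF.
    by rewrite ltnSn.
  by rewrite (count_uniq_mem _ (iota_uniq 0 (size v))) mem_iota; lia.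
rewrite e1 e2; lia.
Qed.
Unset Implicit Arguments.

Theorem theorem5p3 (Omega : seq nat -> Prop) :
  (forall s, Omega s -> is_perm s) ->
  forall p : seq nat, Fset Omega p <-> gamma_modasc_avoid Omega p.
Proof.
move=> hO p; split.
- case=> fp av.
  have [x [mx gx]] := fish_surj (erefl (size p)) fp.
  exists x; split => // y [cy [s [Os gs]]] cxy.
  have := contains_gamma cxy; rewrite gx gs gamma_perm_inv ?hO //.
  exact: av.
- case=> x [mx ax gx]; split.
  + rewrite -gx; apply: fish_gamma.
    case: (posnP (size x)) => [s0|spos].
      by move=> j; rewrite s0 => /andP[h1 h2].
    by have [] := modasc_inv mx spos.
  + move=> s Os cps; rewrite -gx in cps.
    have [y [cy gy cxy]] := gamma_contains (hO s Os) cps.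
    apply: (ax y) => //; split => //; exists s; split => //.
    by rewrite gy gamma_perm_inv ?hO.
Qed.
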